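(* Let $1\le h\le n$, $B=(b_{i,j})\in\Theta_\vartriangle(n,r)$ and $\lambda=\mathrm{ro}(B)$. (1) If $\varepsilon\in\{1,-1\}$ and $\lambda_{h+\varepsilon}\ge1$, then $$[E^\vartriangle_{h,h+\varepsilon}+\mathrm{diag}(\lambda-\mathbf e_{h+\varepsilon})]_1[B]_1=\sum_{i\in\mathbb Z,\ b_{h+\varepsilon,i}\ge1}(b_{h,i}+1)[B+E^\vartriangle_{h,i}-E^\vartriangle_{h+\varepsilon,i}]_1.$$ (2) If $m\in\mathbb Z\setminus\{0\}$ and $\lambda_h\ge1$, then $$[E^\vartriangle_{h,h+mn}+\mathrm{diag}(\lambda-\mathbf e_h)]_1[B]_1=\sum_{s\in\mathbb Z,\ b_{h,s}\ge1}(b_{h,s+mn}+1)[B+E^\vartriangle_{h,s+mn}-E^\vartriangle_{h,s}]_1.$$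
   Context: Fix $n\ge2$, $r\ge1$. $I_\vartriangle(n,r)$ is the set of integer sequences $\mathbf i=(i_k)_{k\in\mathbb Z}$ with $i_{k+r}=i_k+n$. $\Omega_{\mathbb Q}^{\otimes r}$ is the $\mathbb Q$-space with basis $\omega_{\mathbf i}$ ($\mathbf i\in I_\vartriangle(n,r)$), with right action of the affine symmetric group $\mathfrak S_{\vartriangle,r}$ (bijections $w:\mathbb Z\to\mathbb Z$, $w(k+r)=w(k)+r$) given by $\omega_{\mathbf i}w=\omega_{\mathbf iw}$, $(\mathbf iw)_k=i_{w(k)}$; $\mathcal S_\vartriangle(n,r)_{\mathbb Q}=\mathrm{End}_{\mathbb Q\mathfrak S_{\vartriangle,r}}(\Omega_{\mathbb Q}^{\otimes r})$ with composition as product. $\Theta_\vartriangle(n,r)$ is the set of matrices $A=(a_{k,l})_{k,l\in\mathbb Z}$ over $\mathbb N$ with $a_{k+n,l+n}=a_{k,l}$, finitely many nonzero entries per row, and $\sum_{1\le k\le n,\,l}a_{k,l}=r$; $\mathrm{ro}(A)=(\sum_la_{k,l})_{k\in\mathbb Z}$. For $\mathbf i,\mathbf j\in I_\vartriangle(n,r)$ let $M(\mathbf i,\mathbf j)=(a_{k,l})$ with $a_{k,l}=|\{s\in\mathbb Z\mid i_s=k,\ j_s=l\}|$; $[A]_1$ is the map $\omega_{\mathbf j}\mapsto\sum_{\mathbf i:\,M(\mathbf i,\mathbf j)=A}\omega_{\mathbf i}$, and $[A]_1:=0$ if $A$ has a negative entry. $E^\vartriangle_{i,j}$ has $1$ at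 positions $(i+sn,j+sn)$, $s\in\mathbb Z$, and $0$ elsewhere; $\mathbf e_h$ is the $n$-periodic unit vector; $\mathrm{diag}(\mu)$ is the diagonal matrix with entries $\mu_i$; indices are read mod $n$ where relevant. *)

(* Defs.v *)
From HB Require Import structures.
From mathcomp Require Import all_boot all_order all_algebra.
From mathcomp Require Import boolp classical_sets functions cardinality fsbigop.
Set Implicit Arguments. Unset Strict Implicit. Unset Printing Implicit Defensive.
Import Order.TTheory GRing.Theory Num.Theory.
Local Open Scope classical_set_scope.
Local Open Scope ring_scope.

Definition mat := int -> int -> int.

Definition Iset (n r : nat) : set (int -> int) :=
  [set i | forall k : int, i (k + r%:Z) = i k + n%:Z].

Definition Mof (i j : int -> int) : mat := fun k l =>
  ((\big[addn/0%N]_(s \in [set s : int | i s = k /\ j s = l]) 1%N)%N)%:Z.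

Definition in_Theta (n r : nat) (A : mat) : Prop :=
  [/\ (forall k l, A (k + n%:Z) (l + n%:Z) = A k l),
      (forall k l, 0 <= A k l),
      (forall k, finite_set [set l | A k l != 0]) &
      \sum_(k \in [set k : int | 1 <= k <= n%:Z]) \sum_(l \in [set: int]) A k l
        = r%:Z ].

Definition ro (A : mat) : int -> int := fun k => \sum_(l \in [set: int]) A k l.

Definition Edelta (n : nat) (i j : int) : mat := fun k l =>
  if `[< exists s : int, k = i + s * n%:Z /\ l = j + s * n%:Z >] then 1 else 0.

Definition unitv (n : nat) (h : int) : int -> int := fun k =>
  if `[< exists s : int, k = h + s * n%:Z >] then 1 else 0.

Definition diagm (mu : int -> int) : mat := fun k l => if k == l then mu k else 0.

(* Omega_Q^{(r)}: finite Q-linear combinations of the basis vectors omega_i,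
   i in I(n,r); a vector is given by its coordinate function. *)
Definition Omega (n r : nat) : set ((int -> int) -> rat) :=
  [set v | (forall i, ~ Iset n r i -> v i = 0) /\ finite_set [set i | v i != 0]].

Definition omega (i : int -> int) : (int -> int) -> rat := fun i' => (i' == i)%:R.

Definition br_basis (n r : nat) (A : mat) (j : int -> int) : (int -> int) -> rat :=
  fun i => \sum_(i' \in [set i' | Iset n r i' /\ Mof i' j = A]) omega i' i.

(* [A]_1 as an endomorphism of Omega (linear extension), and [A]_1 := 0
   if A has a negative entry. *)
Definition br (n r : nat) (A : mat) (v : (int -> int) -> rat) : (int -> int) -> rat :=
  if `[< exists k l, A k l < 0 >] then (fun _ => 0)
  else fun i => \sum_(j \in Iset n r) v j * br_basis n r A j i.

(* Main.v *)
Require Import Defs.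
From HB Require Import structures.
From mathcomp Require Import all_boot all_order all_algebra finmap.
From mathcomp Require Import boolp classical_sets functions cardinality fsbigop.
From mathcomp Require Import zify ring lra.
Set Implicit Arguments. Unset Strict Implicit. Unset Printing Implicit Defensive.
Import Order.TTheory GRing.Theory Num.Theory.
Local Open Scope classical_set_scope.
Local Open Scope ring_scope.

Lemma step_lin (F : int -> int) (q : int) :
  (forall t, F (t + 1) = F t + q) -> forall t, F t = F 0 + t * q.
Proof.
move=> HF t; elim/int_rec: t => [|m IH|m IH]; first by rewrite mul0r addr0.
  by rewrite -addn1 PoszD HF IH; ring.
have := HF (- (m.+1%:Z)).
have -> : - (m.+1%:Z) + 1 = - (m%:Z) by rewrite -addn1 PoszD; ring.
rewrite IH -addn1 PoszD => H; apply/(@addIr _ q); rewrite -H; ring.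
Qed.

Lemma Iset_shift n r i : Iset n r i -> forall k t, i (k + t * r%:Z) = i k + t * n%:Z.
Proof.
move=> Hi k t; have := @step_lin (fun t => i (k + t * r%:Z)) (n%:Z).
rewrite mul0r addr0 => -> //.
by move=> t'; rewrite mulrDl mul1r addrA Hi.
Qed.

Lemma Theta_shift n r B : in_Theta n r B -> forall k l t,
  B (k + t * n%:Z) (l + t * n%:Z) = B k l.
Proof.
case=> HB _ _ _ k l t.
have := @step_lin (fun t => B (k + t * n%:Z) (l + t * n%:Z)) (0).
rewrite !mul0r !addr0 => ->; rewrite ?mulr0 ?addr0 //.
by move=> t'; rewrite !mulrDl !mul1r !addrA HB addr0.
Qed.

Lemma Edelta1 n a b k l : Edelta n a b k l = 1 <->
  exists s : int, k = a + s * n%:Z /\ l = b + s * n%:Z.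
Proof.
by rewrite /Edelta; case: asboolP => H; split => //.
Qed.

Lemma Edelta0 n a b k l : Edelta n a b k l = 0 <->
  ~ exists s : int, k = a + s * n%:Z /\ l = b + s * n%:Z.
Proof.
by rewrite /Edelta; case: asboolP => H; split => //.
Qed.

Lemma Edelta01 n a b k l : Edelta n a b k l = 0 \/ Edelta n a b k l = 1.
Proof. by rewrite /Edelta; case: asboolP; auto. Qed.

Lemma Edelta_ge0 n a b k l : 0 <= Edelta n a b k l.
Proof. by case: (Edelta01 n a b k l) => ->. Qed.

Lemma Edelta_shift n a b t : Edelta n (a + t * n%:Z) (b + t * n%:Z) = Edelta n a b.
Proof.
apply/funext => k; apply/funext => l; rewrite /Edelta.
congr (if _ then _ else _); apply: asbool_equiv_eq; split.
  by case=> s [-> ->]; exists (t + s); split; ring.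
by case=> s [-> ->]; exists (s - t); split; ring.
Qed.

Lemma Iset_mod n r i s : Iset n r i ->
  i s = i (s %% r%:Z)%Z + (s %/ r%:Z)%Z * n%:Z.
Proof.
move=> Hi; rewrite -(Iset_shift Hi); congr (i _).
by rewrite addrC -divz_eq.
Qed.

Lemma Mof_E n r i j k l : (0 < n)%N -> (0 < r)%N -> Iset n r i -> Iset n r j ->
  Mof i j k l = \sum_(s < r) Edelta n (i (s : nat)%:Z) (j (s : nat)%:Z) k l.
Proof.
move=> n0 r0 Hi Hj.
have rn0 : r%:Z != 0 by lia.
have nn0 : n%:Z != 0 by lia.
pose S0 := [set s0 : int | 0 <= s0 < r%:Z /\ Edelta n (i s0) (j s0) k l = 1].
pose S := [set s : int | i s = k /\ j s = l].
have E1 : (\big[addn/0%N]_(s \in S) 1%N = \big[addn/0%N]_(s0 \in S0) 1%N)%N.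
  rewrite (reindex_fsbig (fun s : int => (s %% r%:Z)%Z) S S0 (fun=> 1%N)) //.
  split.
  - move=> s /= [His Hjs]; split.
      by rewrite modz_ge0 //= ltz_pmod // ltz_nat.
    apply/Edelta1; exists (s %/ r%:Z)%Z.
    by rewrite -His -Hjs (Iset_mod s Hi) (Iset_mod s Hj).
  - move=> s s' /set_mem [His Hjs] /set_mem [Hi's Hj's] Hm.
    rewrite (divz_eq s r%:Z) (divz_eq s' r%:Z) Hm; congr (_ * _ + _).
    move: His Hi's; rewrite (Iset_mod s Hi) (Iset_mod s' Hi) Hm => <- /eqP.
    by rewrite (inj_eq (addrI _)) (inj_eq (mulIf nn0)) => /eqP.
  - move=> s0 /= [/andP [s0ge s0lt] /Edelta1 [t [Hk Hl]]].
    exists (s0 + t * r%:Z) => /=.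
      by rewrite /S /= (Iset_shift Hi) (Iset_shift Hj) -Hk -Hl.
    by rewrite addrC modzMDl modz_small ?s0ge ?s0lt.
rewrite /Mof -/S E1.
rewrite (eq_fsbigr (fun s0 => nat_of_bool (s0 \in S0))); last first.
  by move=> x /set_mem Hx; rewrite mem_set.
rewrite (fsbig_fwiden (map Posz (iota 0 r))); first last.
- move=> x [/= Hx HS]; rewrite /= memNset //.
- by rewrite map_inj_uniq ?iota_uniq //; move=> a b [].
- move=> x [/andP [x0 xr] _] /=; apply/mapP; exists `|x|%N.
    by rewrite mem_iota add0n; lia.
  lia.
have -> : iota 0 r = index_iota 0 r by rewrite /index_iota subn0.
rewrite big_map big_mkord.
rewrite (big_morph Posz PoszD (erefl 0%:Z)); apply: eq_bigr => s _.
case: (Edelta01 n (i s) (j s) k l) => E.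
  rewrite E memNset // /S0 /= => -[_]; rewrite E; lia.
by rewrite E mem_set // /S0 /=; split => //; rewrite ltz_nat ltn_ord.
Qed.

Lemma unitv1 n a k : (exists t : int, k = a + t * n%:Z) -> unitv n a k = 1.
Proof. by move=> H; rewrite /unitv; case: asboolP. Qed.

Lemma unitv0 n a k : ~ (exists t : int, k = a + t * n%:Z) -> unitv n a k = 0.
Proof. by move=> H; rewrite /unitv; case: asboolP. Qed.

Lemma ro_Mof n r a b k : (0 < n)%N -> (0 < r)%N -> Iset n r a -> Iset n r b ->
  ro (Mof a b) k = \sum_(s < r) unitv n (a (s : nat)%:Z) k.
Proof.
move=> n0 r0 Ha Hb; rewrite /ro.
under eq_fsbigr => l _ do rewrite (Mof_E _ _ n0 r0 Ha Hb).
pose g := fun s : 'I_r => b (s : nat)%:Z + (k - a (s : nat)%:Z).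
pose A := seq_fset tt (map g (enum 'I_r)).
rewrite (fsbigTE A); last first.
  move=> l lA; apply: big1 => s _; apply/Edelta0 => -[t [Hk Hl]].
  move/negP: lA; apply; rewrite seq_fsetE; apply/mapP; exists s; first by rewrite mem_enum.
  by rewrite /g Hl Hk; ring.
rewrite exchange_big /=; apply: eq_bigr => s _.
have nn0 : n%:Z != 0 by lia.
case: (asboolP (exists t : int, k = a (s : nat)%:Z + t * n%:Z)) => [[t Ht]|Hn].
  rewrite unitv1; last by exists t.
  rewrite (bigD1_seq (b (s : nat)%:Z + t * n%:Z)); last 2 first.
    apply: mem_sort_keys; apply/mapP; exists s; first by rewrite mem_enum.
    by rewrite /g Ht; ring.
    exact: (fset_uniq (seq_fset tt (map g (enum 'I_r)))).
  rewrite (_ : Edelta _ _ _ _ _ = 1); last by apply/Edelta1; exists t.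
  rewrite big1 ?addr0 // => l /eqP Hl; apply/Edelta0 => -[t' [Hk Hl']].
  apply: Hl; rewrite Hl'; congr (_ + _ * _).
  apply/(mulIf nn0)/(addrI (a (s : nat)%:Z)); by rewrite -Ht -Hk.
rewrite unitv0 // big1 // => l _; apply/Edelta0 => -[t [Hk _]]; apply: Hn.
by exists t.
Qed.

Definition jm (r : nat) (x : int -> int) (s0 : int) (d : int) : int -> int :=
  fun s => x s + (if (s %% r%:Z)%Z == s0 then d else 0).

Lemma jm_I n r x s0 d : Iset n r x -> Iset n r (jm r x s0 d).
Proof. by move=> Hx k; rewrite /jm Hx modzDr; ring. Qed.

Lemma jm_val r x (s0 s : 'I_r) d :
  jm r x (s0 : nat)%:Z d (s : nat)%:Z = x (s : nat)%:Z + (if s == s0 then d else 0).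
Proof.
rewrite /jm modz_small; last by apply/andP; split; [|rewrite ltz_nat ltn_ord].
by rewrite eqz_nat.
Qed.

Lemma Mof_jm_l n r a b (s0 : 'I_r) d k l : (0 < n)%N -> Iset n r a -> Iset n r b ->
  Mof (jm r a (s0 : nat)%:Z d) b k l = Mof a b k l
    - Edelta n (a (s0 : nat)%:Z) (b (s0 : nat)%:Z) k l
    + Edelta n (a (s0 : nat)%:Z + d) (b (s0 : nat)%:Z) k l.
Proof.
move=> n0 Ha Hb; have r0 : (0 < r)%N by apply: (leq_ltn_trans (leq0n s0)).
rewrite (Mof_E _ _ n0 r0 (jm_I _ _ Ha) Hb) (Mof_E _ _ n0 r0 Ha Hb).
rewrite (bigD1 s0) //= [in RHS](bigD1 s0) //= jm_val eqxx.
rewrite (eq_bigr (fun s : 'I_r => Edelta n (a (s : nat)%:Z) (b (s : nat)%:Z) k l)).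
  by ring.
by move=> s /negPf Hs; rewrite jm_val Hs addr0.
Qed.

Lemma Mof_jm_r n r a b (s0 : 'I_r) d k l : (0 < n)%N -> Iset n r a -> Iset n r b ->
  Mof a (jm r b (s0 : nat)%:Z d) k l = Mof a b k l
    - Edelta n (a (s0 : nat)%:Z) (b (s0 : nat)%:Z) k l
    + Edelta n (a (s0 : nat)%:Z) (b (s0 : nat)%:Z + d) k l.
Proof.
move=> n0 Ha Hb; have r0 : (0 < r)%N by apply: (leq_ltn_trans (leq0n s0)).
rewrite (Mof_E _ _ n0 r0 Ha (jm_I _ _ Hb)) (Mof_E _ _ n0 r0 Ha Hb).
rewrite (bigD1 s0) //= [in RHS](bigD1 s0) //= jm_val eqxx.
rewrite (eq_bigr (fun s : 'I_r => Edelta n (a (s : nat)%:Z) (b (s : nat)%:Z) k l)).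
  by ring.
by move=> s /negPf Hs; rewrite jm_val Hs addr0.
Qed.

Definition ind (P : Prop) : rat := if `[< P >] then 1 else 0.

Lemma indT (P : Prop) : P -> ind P = 1.
Proof. by rewrite /ind; case: asboolP. Qed.

Lemma indF (P : Prop) : ~ P -> ind P = 0.
Proof. by rewrite /ind; case: asboolP. Qed.

Lemma ind_and (P Q : Prop) : ind (P /\ Q) = ind P * ind Q.
Proof.
rewrite /ind; case: asboolP => [[p q]|npq].
  by rewrite !asboolT // mulr1.
by case: asboolP => p; case: asboolP => q //; rewrite ?mulr0 ?mul0r //; case: npq.
Qed.

Lemma br_basis_eq n r A j i : br_basis n r A j i = ind (Iset n r i /\ Mof i j = A).
Proof.
rewrite /br_basis; case: (asboolP (Iset n r i /\ Mof i j = A)) => H.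
  rewrite indT // (fsbigE [:: i]) //=.
  - by rewrite big_cons big_nil mem_set // /omega eqxx addr0.
  - by move=> y /=; rewrite inE => /eqP ->.
  - by move=> i' _; rewrite inE /omega eq_sym => /negPf ->.
rewrite indF // fsbig1 // => i' Si'; rewrite /omega; case: eqP => // Ei.
by case: H; rewrite Ei.
Qed.

Lemma br_eq n r A w x :
  br n r A w x = \sum_(j \in Iset n r) w j * ind (Iset n r x /\ Mof x j = A).
Proof.
rewrite /br; case: asboolP => [[k [l Hkl]]|Hn].
  rewrite fsbig1 // => j _; rewrite indF ?mulr0 // => -[_ E].
  by move: Hkl; rewrite -E /Mof ltNge => /negP; apply.
by apply: eq_fsbigr => j _; rewrite br_basis_eq.
Qed.

Lemma br_list n r A v x (L : seq (int -> int)) : uniq L ->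
  (forall j, j \in L -> Iset n r j) -> (forall j, j \notin L -> v j = 0) ->
  Iset n r x ->
  br n r A v x = \sum_(j <- L) v j * ind (Mof x j = A).
Proof.
move=> uL LI vL Ix; rewrite br_eq (fsbigE L) //; last first.
  by move=> j _ /vL ->; rewrite mul0r.
rewrite big_mkcond [RHS]big_seq [LHS]big_seq; apply: eq_bigr => j jL.
rewrite mem_set; last exact: LI.
congr (_ * _).
rewrite /ind; have -> : `[< Iset n r x /\ Mof x j = A >] = `[< Mof x j = A >].
  by apply: asbool_equiv_eq; split => // -[].
by [].
Qed.

Lemma Omega_list n r v : Omega n r v -> exists L : seq (int -> int),
  [/\ uniq L, (forall j, j \in L -> Iset n r j) & (forall j, j \notin L -> v j = 0)].
Proof.
case=> vI vfin; exists (fset_set [set j | v j != 0]); split.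
- exact: fset_uniq.
- move=> j; rewrite in_fset_set // inE /= => vj.
  by apply: contrapT => nI; move/eqP: vj; apply; apply: vI.
- move=> j; rewrite in_fset_set // => /negP H; apply/eqP; apply: contrapT => H'.
  by apply: H; apply: mem_set; apply/negP.
Qed.

Lemma Edelta_sym n a b k l : Edelta n a b k l = Edelta n k l a b.
Proof.
rewrite /Edelta; congr (if _ then _ else _); apply: asbool_equiv_eq.
by split => -[t [-> ->]]; exists (- t); split; ring.
Qed.

Lemma Ediag n a k l : Edelta n a a k l = if k == l then unitv n a k else 0.
Proof.
case: eqP => [<-|kl].
  rewrite /Edelta /unitv; congr (if _ then _ else _); apply: asbool_equiv_eq.
  by split => -[t]; [case=> -> _|move=> ->]; exists t.
by apply/Edelta0 => -[t [Hk Hl]]; apply: kl; rewrite Hk Hl.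
Qed.

Lemma unitv_shift n a t : unitv n (a + t * n%:Z) = unitv n a.
Proof.
apply/funext => k; rewrite /unitv; congr (if _ then _ else _); apply: asbool_equiv_eq.
split => -[s ->]; [exists (t + s)|exists (s - t)]; ring.
Qed.

Lemma Mof_xx n r x k l : (0 < n)%N -> (0 < r)%N -> Iset n r x ->
  Mof x x k l = if k == l then \sum_(s < r) unitv n (x (s : nat)%:Z) k else 0.
Proof.
move=> n0 r0 Hx; rewrite (Mof_E _ _ n0 r0 Hx Hx).
case: eqP => kl; [apply: eq_bigr|apply: big1] => s _; rewrite Ediag;
  case: eqP => //.
Qed.

Lemma Iset_ext n r f g : (0 < r)%N -> Iset n r f -> Iset n r g ->
  (forall s : 'I_r, f (s : nat)%:Z = g (s : nat)%:Z) -> f = g.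
Proof.
move=> r0 Hf Hg E; apply/funext => s.
rewrite (Iset_mod s Hf) (Iset_mod s Hg); congr (_ + _).
have r0' : r%:Z != 0 by lia.
have H0 : 0 <= (s %% r%:Z)%Z by rewrite modz_ge0.
have H1 : (s %% r%:Z)%Z < r%:Z by rewrite ltz_pmod // ltz_nat.
have := E (Ordinal (n := r) (m := `|(s %% r%:Z)%Z|%N) (ltac:(lia))).
by rewrite /= gez0_abs.
Qed.

Definition Xm n (B : mat) h d : mat := fun k l =>
  Edelta n h (h + d) k l + diagm (fun t => ro B t - unitv n (h + d) t) k l.
Definition Cm n (B : mat) h d i : mat := fun k l =>
  B k l + Edelta n h i k l - Edelta n (h + d) i k l.



Lemma K1 n r h B d x (s0 : 'I_r) : (0 < n)%N -> d != 0 -> Iset n r x ->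
  Mof x (jm r x (s0 : nat)%:Z d) = Xm n B h d ->
  exists t, x (s0 : nat)%:Z = h + t * n%:Z.
Proof.
move=> n0 dn0 Hx HX; have r0 : (0 < r)%N by apply: (leq_ltn_trans (leq0n s0)).
set a := x (s0 : nat)%:Z.
have := congr1 (fun M => M a (a + d)) HX => /=.
rewrite (Mof_jm_r s0 d a (a + d) n0 Hx Hx) (Mof_xx _ _ n0 r0 Hx) Ediag.
have -> : (a == a + d) = false by apply/negbTE; lia.
rewrite /Xm /diagm.
have -> : (a == a + d) = false by apply/negbTE; lia.
rewrite (_ : Edelta n a (a + d) a (a + d) = 1); last by apply/Edelta1; exists 0; split; ring.
rewrite subrr add0r addr0 => /esym /Edelta1 [t [Ha _]].
by exists t.
Qed.

Lemma K2 n r x j' (s0 : 'I_r) h d t k l : (0 < n)%N -> Iset n r x -> Iset n r j' ->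
  x (s0 : nat)%:Z = h + t * n%:Z ->
  Mof (jm r x (s0 : nat)%:Z d) j' k l = Mof x j' k l
    - Edelta n h (j' (s0 : nat)%:Z - t * n%:Z) k l
    + Edelta n (h + d) (j' (s0 : nat)%:Z - t * n%:Z) k l.
Proof.
move=> n0 Hx Hj Hxs.
rewrite (Mof_jm_l s0 d k l n0 Hx Hj) Hxs.
set i := j' (s0 : nat)%:Z - t * n%:Z.
have -> : j' (s0 : nat)%:Z = i + t * n%:Z by rewrite /i; ring.
have -> : h + t * n%:Z + d = h + d + t * n%:Z by ring.
by rewrite !Edelta_shift.
Qed.

Lemma K3 n r B x j' (s0 : 'I_r) h d t : (0 < n)%N -> Iset n r x -> Iset n r j' ->
  x (s0 : nat)%:Z = h + t * n%:Z -> Mof (jm r x (s0 : nat)%:Z d) j' = B ->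
  Mof x (jm r x (s0 : nat)%:Z d) = Xm n B h d.
Proof.
move=> n0 Hx Hj Hxs HB; have r0 : (0 < r)%N by apply: (leq_ltn_trans (leq0n s0)).
apply/funext => k; apply/funext => l.
rewrite (Mof_jm_r s0 d k l n0 Hx Hx) (Mof_xx _ _ n0 r0 Hx) Ediag Hxs.
have -> : h + t * n%:Z + d = h + d + t * n%:Z by ring.
rewrite Edelta_shift /Xm /diagm.
case: eqP => [<-|kl]; last by rewrite subrr add0r addr0.
rewrite -HB (ro_Mof _ n0 r0 (jm_I _ _ Hx) Hj) (bigD1 s0) //= [in RHS](bigD1 s0) //=.
rewrite jm_val eqxx Hxs.
have -> : h + t * n%:Z + d = h + d + t * n%:Z by ring.
rewrite !unitv_shift.
under [in RHS]eq_bigr => s Hs do rewrite jm_val (negPf Hs) addr0.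
by ring.
Qed.

Lemma K0 n r B h d x j : (0 < n)%N -> (0 < r)%N -> d != 0 -> Iset n r x -> Iset n r j ->
  Mof x j = Xm n B h d -> exists s0 : 'I_r, j = jm r x (s0 : nat)%:Z d.
Proof.
move=> n0 r0 dn0 Hx Hj HX.
have HE : forall k l, \sum_(s < r) Edelta n (x (s : nat)%:Z) (j (s : nat)%:Z) k l
    = Xm n B h d k l.
  by move=> k l; rewrite -(Mof_E _ _ n0 r0 Hx Hj) HX.
have Xoff : forall k l, k != l -> Xm n B h d k l = Edelta n h (h + d) k l.
  by move=> k l /negPf kl; rewrite /Xm /diagm kl addr0.
have stepb : forall s : 'I_r, x (s : nat)%:Z != j (s : nat)%:Z ->
    exists t, x (s : nat)%:Z = h + t * n%:Z /\ j (s : nat)%:Z = h + d + t * n%:Z.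
  move=> s xs; have := HE (x (s : nat)%:Z) (j (s : nat)%:Z).
  rewrite Xoff // (bigD1 s) //=.
  rewrite (_ : Edelta n _ _ _ _ = 1); last by apply/Edelta1; exists 0; split; ring.
  move=> H; have : 1 <= Edelta n h (h + d) (x (s : nat)%:Z) (j (s : nat)%:Z).
    by rewrite -H lerDl; apply: sumr_ge0 => i _; exact: Edelta_ge0.
  case: (Edelta01 n h (h + d) (x (s : nat)%:Z) (j (s : nat)%:Z)) => E; first by rewrite E.
  by move=> _; move/Edelta1: E => [t [H1 H2]]; exists t.
case: (pickP (fun s : 'I_r => x (s : nat)%:Z != j (s : nat)%:Z)) => [s0 Hs0|Hall]; last first.
  exfalso.
  have Ejx : j = x.
    by apply: (Iset_ext r0 Hj Hx) => s; move/negbFE/eqP: (Hall s) => ->.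
  have := HE h (h + d); rewrite Xoff; last by lia.
  rewrite (_ : Edelta n h (h + d) h (h + d) = 1); last by apply/Edelta1; exists 0; split; ring.
  rewrite Ejx big1 // => s _; rewrite Ediag.
  by have -> : (h == h + d) = false by apply/negbTE; lia.
exists s0; case: (stepb s0 Hs0) => t [Hx0 Hj0].
have others : forall s : 'I_r, s != s0 -> x (s : nat)%:Z = j (s : nat)%:Z.
  move=> s ss0; apply/eqP; apply: contraT => Hs.
  case: (stepb s Hs) => t' [Hx1 Hj1].
  have := HE (x (s0 : nat)%:Z) (j (s0 : nat)%:Z); rewrite Xoff //.
  rewrite (bigD1 s0) //= (bigD1 s) //= Hx0 Hj0 Hx1 Hj1 !Edelta_shift.
  have e1 : Edelta n h (h + d) (h + t * n%:Z) (h + d + t * n%:Z) = 1.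
    by apply/Edelta1; exists t.
  rewrite e1 => H.
  have : 0 <= \sum_(i < r | (i != s0) && (i != s))
      Edelta n (x (i : nat)%:Z) (j (i : nat)%:Z) (h + t * n%:Z) (h + d + t * n%:Z).
    by apply: sumr_ge0 => i _; exact: Edelta_ge0.
  move: H; set S := (\sum_(i < r | _) _) => H HS; lia.
apply: (Iset_ext r0 Hj (jm_I _ _ Hx)) => s.
rewrite jm_val; case: eqP => [->|/eqP ne]; first by rewrite Hj0 Hx0; ring.
by rewrite addr0 others.
Qed.

Lemma Edelta_d0 n a d i : (0 < n)%N -> d != 0 -> Edelta n a i (a + d) i = 0.
Proof.
move=> n0 dn0; apply/Edelta0 => -[t [H1 H2]].
have : t * n%:Z = 0 by lia.
move/eqP; rewrite mulf_eq0 => /orP [/eqP t0|]; last by lia.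
by move: H1; rewrite t0 mul0r addr0 => /eqP; rewrite -subr_eq0 addrAC subrr add0r; apply/negP.
Qed.

Lemma Edelta_d0' n a d i : (0 < n)%N -> d != 0 -> Edelta n (a + d) i a i = 0.
Proof.
move=> n0 dn0; apply/Edelta0 => -[t [H1 H2]].
have : t * n%:Z = 0 by lia.
move/eqP; rewrite mulf_eq0 => /orP [/eqP t0|]; last by lia.
by move: H1; rewrite t0 mul0r addr0; lia.
Qed.

Lemma Cm_pos n B h d (x j' : int -> int) i : (0 < n)%N -> d != 0 ->
  Mof x j' = Cm n B h d i -> 1 <= B (h + d) i.
Proof.
move=> n0 dn0 HM; have := congr1 (fun M => M (h + d) i) HM => /=.
rewrite /Cm Edelta_d0 // (_ : Edelta n (h + d) i (h + d) i = 1); last first.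
  by apply/Edelta1; exists 0; split; ring.
rewrite /Mof => H; have : (0 <= B (h + d) i + 0 - 1) by rewrite -H.
lia.
Qed.

Lemma Kkey n r B h d x j' (s0 : 'I_r) (L : seq int) : (0 < n)%N -> d != 0 ->
  Iset n r x -> Iset n r j' -> uniq L -> (forall i, 1 <= B (h + d) i -> i \in L) ->
  ind (Mof (jm r x (s0 : nat)%:Z d) j' = B /\ Mof x (jm r x (s0 : nat)%:Z d) = Xm n B h d)
  = \sum_(i <- L) ind (Edelta n h i (x (s0 : nat)%:Z) (j' (s0 : nat)%:Z) = 1)
                  * ind (Mof x j' = Cm n B h d i).
Proof.
move=> n0 dn0 Hx Hj uL HL.
have nn0 : n%:Z != 0 by lia.
case: (asboolP (exists t, x (s0 : nat)%:Z = h + t * n%:Z)) => [[t Ht]|Hn]; last first.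
  rewrite indF; last by move=> [_ HX]; apply: Hn; exact: (K1 n0 dn0 Hx HX).
  rewrite big1 // => i _; rewrite indF ?mul0r // => /Edelta1 [t [H1 _]].
  by apply: Hn; exists t.
set i0 := j' (s0 : nat)%:Z - t * n%:Z.
have Ei : forall i, Edelta n h i (x (s0 : nat)%:Z) (j' (s0 : nat)%:Z) = 1 <-> i = i0.
  move=> i; split.
    move/Edelta1 => [t' [H1 H2]].
    have tt' : t' = t.
      by apply: (mulIf nn0); apply: (addrI h); rewrite -H1 -Ht.
    by rewrite /i0 H2 tt'; ring.
  by move=> ->; apply/Edelta1; exists t; split => //; rewrite /i0; ring.
have EB : (Mof (jm r x (s0 : nat)%:Z d) j' = B) <-> (Mof x j' = Cm n B h d i0).
  split => HM; apply/funext => k; apply/funext => l.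
    have := congr1 (fun M => M k l) HM => /=.
    rewrite (K2 d k l n0 Hx Hj Ht) -/i0 /Cm => <-; ring.
  rewrite (K2 d k l n0 Hx Hj Ht) -/i0 HM /Cm; ring.
have -> : ind (Mof (jm r x (s0 : nat)%:Z d) j' = B /\
    Mof x (jm r x (s0 : nat)%:Z d) = Xm n B h d) = ind (Mof x j' = Cm n B h d i0).
  rewrite /ind; congr (if _ then _ else _); apply: asbool_equiv_eq; split.
    by case=> /EB.
  by move=> /EB HB; split => //; exact: (K3 n0 Hx Hj Ht HB).
case: (boolP (i0 \in L)) => i0L.
  rewrite (bigD1_seq i0) //= (indT (proj2 (Ei i0) erefl)) mul1r big1 ?addr0 //.
  by move=> i /eqP ii0; rewrite indF ?mul0r // => /Ei.
rewrite indF; last by move=> HM; move: (HL _ (Cm_pos n0 dn0 HM)); apply/negP.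
rewrite big1_seq // => i /andP [_ iL]; rewrite indF ?mul0r // => /Ei Eii.
by move: iL; rewrite Eii (negPf i0L).
Qed.

Lemma Ksum n r B h d x j' (L : seq int) : (0 < n)%N -> (0 < r)%N -> d != 0 ->
  Iset n r x -> Iset n r j' -> uniq L -> (forall i, 1 <= B (h + d) i -> i \in L) ->
  \sum_(s0 < r) ind (Mof (jm r x (s0 : nat)%:Z d) j' = B)
                * ind (Mof x (jm r x (s0 : nat)%:Z d) = Xm n B h d)
  = \sum_(i <- L) (B h i + 1)%:~R * ind (Mof x j' = Cm n B h d i).
Proof.
move=> n0 r0 dn0 Hx Hj uL HL.
under eq_bigr => s0 _ do rewrite -ind_and (Kkey s0 n0 dn0 Hx Hj uL HL).
rewrite exchange_big /=; apply: eq_bigr => i _.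
rewrite -mulr_suml.
case: (asboolP (Mof x j' = Cm n B h d i)) => HM; last by rewrite indF // !mulr0.
rewrite indT // !mulr1.
have -> : \sum_(s0 < r) ind (Edelta n h i (x (s0 : nat)%:Z) (j' (s0 : nat)%:Z) = 1)
    = (Mof x j' h i)%:~R.
  rewrite (Mof_E _ _ n0 r0 Hx Hj) rmorph_sum; apply: eq_bigr => s _.
  rewrite Edelta_sym; case: (Edelta01 n (x (s : nat)%:Z) (j' (s : nat)%:Z) h i) => ->.
    by rewrite indF.
  by rewrite indT.
rewrite HM /Cm Edelta_d0' // (_ : Edelta n h i h i = 1) ?subr0 //.
by apply/Edelta1; exists 0; split; ring.
Qed.

Lemma br_notI n r A w x : ~ Iset n r x -> br n r A w x = 0.
Proof.
move=> nI; rewrite br_eq fsbig1 // => j _; rewrite indF ?mulr0 //; by case.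
Qed.

Lemma general n r B h d v : (0 < n)%N -> (0 < r)%N -> d != 0 ->
  in_Theta n r B -> Omega n r v ->
  br n r (Xm n B h d) (br n r B v)
  = fun x => \sum_(i \in [set i : int | 1 <= B (h + d) i])
               (B h i + 1)%:~R * br n r (Cm n B h d i) v x.
Proof.
move=> n0 r0 dn0 HB Hv; apply/funext => x.
have [Lv [uLv LvI vLv]] := Omega_list Hv.
have Rfin : finite_set [set i : int | 1 <= B (h + d) i].
  case: HB => _ _ Hfin _; apply: sub_finite_set (Hfin (h + d)).
  by move=> i /= Hi; lia.
rewrite fsbig_finite //.
set LR := fset_set _.
have uLR : uniq LR by exact: fset_uniq.
have HL : forall i, 1 <= B (h + d) i -> i \in LR.
  by move=> i Hi; rewrite /LR in_fset_set // inE.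
case: (asboolP (Iset n r x)) => Ix; last first.
  rewrite br_notI // big1 // => i _; by rewrite br_notI ?mulr0.
under eq_bigr => i _ do rewrite (br_list _ uLv LvI vLv Ix) mulr_sumr.
rewrite exchange_big /=.
rewrite br_eq (fsbigE (map (fun s0 : 'I_r => jm r x (s0 : nat)%:Z d) (enum 'I_r)));
  first last.
- move=> j Ij jn; rewrite indF ?mulr0 // => -[_ HM].
  have [s0 E] := K0 n0 r0 dn0 Ix Ij HM.
  by move/negP: jn; apply; apply/mapP; exists s0; rewrite ?mem_enum.
- by move=> j /= /mapP [s0 _ ->]; exact: jm_I.
- rewrite map_inj_uniq ?enum_uniq // => s0 s1 E.
  have := congr1 (fun f => f (s0 : nat)%:Z) E; rewrite !jm_val eqxx.
  case: eqP => // ne /eqP; rewrite addr0 -subr_eq0 addrAC subrr add0r.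
  by rewrite (negPf dn0).
rewrite big_map big_enum_cond /= big_mkcond /=.
rewrite (eq_bigr (fun s0 : 'I_r => (\sum_(j' <- Lv) v j' *
    ind (Mof (jm r x (s0 : nat)%:Z d) j' = B)) *
    ind (Mof x (jm r x (s0 : nat)%:Z d) = Xm n B h d))); last first.
  move=> s0 _; rewrite mem_set; last exact: jm_I.
  by rewrite (br_list B uLv LvI vLv (jm_I _ _ Ix)) ind_and (indT Ix) mul1r.
under eq_bigr do rewrite mulr_suml.
rewrite exchange_big /=; apply: eq_big_seq => j' j'L.
under eq_bigr do rewrite -mulrA.
rewrite -mulr_sumr.
under [RHS]eq_bigr do rewrite mulrCA.
rewrite -[RHS]mulr_sumr; congr (_ * _).
exact: (Ksum n0 r0 dn0 Ix (LvI _ j'L) uLR HL).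
Qed.

Unset Implicit Arguments.

Theorem proposition6p2p3 (n r : nat) (h : int) (B : mat) :
  (2 <= n)%N -> (1 <= r)%N -> 1 <= h <= n%:Z -> in_Theta n r B ->
  (forall eps : int, (eps = 1 \/ eps = -1) -> 1 <= ro B (h + eps) ->
     forall v, Omega n r v ->
       br n r (fun k l => Edelta n h (h + eps) k l
                          + diagm (fun t => ro B t - unitv n (h + eps) t) k l)
          (br n r B v)
       = fun x => \sum_(i \in [set i : int | 1 <= B (h + eps) i])
                    (B h i + 1)%:~R *
                    br n r (fun k l => B k l + Edelta n h i k l
                                       - Edelta n (h + eps) i k l) v x)
  /\
  (forall m : int, m != 0 -> 1 <= ro B h ->
     forall v, Omega n r v ->
       br n r (fun k l => Edelta n h (h + m * n%:Z) k l
                          + diagm (fun t => ro B t - unitv n h t) k l)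
          (br n r B v)
       = fun x => \sum_(s \in [set s : int | 1 <= B h s])
                    (B h (s + m * n%:Z) + 1)%:~R *
                    br n r (fun k l => B k l + Edelta n h (s + m * n%:Z) k l
                                       - Edelta n h s k l) v x).
Proof.
move=> n2 r1 hb HB; have n0 : (0 < n)%N by apply: leq_trans n2.
split.
- move=> eps Heps _ v Hv.
  have dn0 : eps != 0 by case: Heps => ->.
  exact: (@general n r B h eps v n0 r1 dn0 HB Hv).
- move=> m mn0 _ v Hv.
  have dn0 : m * n%:Z != 0 by rewrite mulf_eq0 negb_or mn0 /=; lia.
  have := @general n r B h (m * n%:Z) v n0 r1 dn0 HB Hv.
  rewrite /Xm unitv_shift => ->.
  apply/funext => x.
  rewrite (reindex_fsbig (fun s => s + m * n%:Z) [set s | 1 <= B h s]).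
    apply: eq_fsbigr => s _; rewrite /Cm Edelta_shift //.
  split.
  + by move=> s /= Hs; rewrite (Theta_shift HB).
  + by move=> s s' _ _ /addIr.
  + move=> i /= Hi; exists (i - m * n%:Z); last by rewrite subrK.
    by rewrite /= -(Theta_shift HB h (i - m * n%:Z) m) subrK.
Qed.
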